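(* Let $n\ge1$, $N=2^n$. Then $S^{(0)}_{0,0}=0$, $S^{(0)}_{0,1}=1$, and for all $w$: (i) if $0\le i<N/2$, then $S^{(n)}_{i,w}=\sum_{0\le w'\le \min(w,N/2),\ w'\equiv w \ (\mathrm{mod}\ 2)} S^{(n-1)}_{i,w'}\binom{N/2-w'}{(w-w')/2}2^{w'}$; (ii) if $N/2\le i<N$, then $S^{(n)}_{i,2w}=S^{(n-1)}_{i-N/2,w}$ and $S^{(n)}_{i,2w+1}=0$. Moreover, the numbers $T^{(n)}_{i,w}$ satisfy exactly the same recursions (i) and (ii) (with $S$ replaced by $T$), with initial values $T^{(0)}_{0,0}=1$, $T^{(0)}_{0,1}=0$.
   Context: All vectors are binary (over $GF(2)$), indices are zero-based. Let $G_2=\begin{pmatrix}1&0\\1&1\end{pmatrix}$ and $G_N=G_2^{\otimes n}$ for $N=2^n$ (with $G_1=(1)$), and let $\mathbf{g}_0,\ldots,\mathbf{g}_{N-1}$ denote the rows of $G_N$. For $0\le i<N$, $S^{(n)}_{i,w}$ is the number of words of Hamming weight $w$ in $\mathbf{g}_i+\langle\mathbf{g}_{i+1},\ldots,\mathbf{g}_{N-1}\rangle$, and $T^{(n)}_{i,w}$ is the number of words of Hamming weight $w$ in the linear span $\langle\mathbf{g}_{i+1},\ldots,\mathbf{g}_{N-1}\rangle$. *)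

(* Defs.v *)
From HB Require Import structures.
From mathcomp Require Import all_boot all_order all_algebra.
Set Implicit Arguments. Unset Strict Implicit. Unset Printing Implicit Defensive.
Import GRing.Theory.
Local Open Scope ring_scope.

(* Entries of G_2 = [[1,0],[1,1]] (zero-based indices a, b < 2). *)
Definition G2e (a b : nat) : bool := (a < 2)%N && (b <= a)%N.

(* Entries of the Kronecker power G_2^{(x)n}, by the defining formula of the
   Kronecker product  G_2^{(x)(n+1)} = G_2 (x) G_2^{(x)n}:
   (A (x) B)_{i,j} = A_{i / 2^n, j / 2^n} * B_{i mod 2^n, j mod 2^n}. *)
Fixpoint kronG2e (n i j : nat) : bool :=
  match n with
  | 0 => (i == 0)%N && (j == 0)%N
  | m.+1 => G2e (i %/ 2 ^ m) (j %/ 2 ^ m) && kronG2e m (i %% 2 ^ m) (j %% 2 ^ m)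
  end.

Definition GN (n : nat) : 'M['F_2]_(2 ^ n) :=
  \matrix_(i, j) (kronG2e n i j)%:R.

(* row g_i of G_N (i : nat, meaningful for i < 2^n) *)
Definition grow (n i : nat) : 'rV['F_2]_(2 ^ n) :=
  \row_j (kronG2e n i j)%:R.

Definition tailspan (n i : nat) : 'M['F_2]_(2 ^ n) :=
  \matrix_(k < 2 ^ n) (if (i < k)%N then row k (GN n) else 0).

Definition wt (N : nat) (v : 'rV['F_2]_N) : nat := #|[set j | v 0 j != 0]|.

(* S^{(n)}_{i,w}: number of words of weight w in g_i + <g_{i+1},...,g_{N-1}> *)
Definition Scount (n i w : nat) : nat :=
  #|[set v : 'rV['F_2]_(2 ^ n) | (v - grow n i <= tailspan n i)%MS && (wt v == w)]|.

(* T^{(n)}_{i,w}: number of words of weight w in <g_{i+1},...,g_{N-1}> *)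
Definition Tcount (n i w : nat) : nat :=
  #|[set v : 'rV['F_2]_(2 ^ n) | (v <= tailspan n i)%MS && (wt v == w)]|.

(* Main.v *)
Require Import Defs.
From mathcomp Require Import all_boot all_order all_algebra.
From mathcomp Require Import zify.
Set Implicit Arguments. Unset Strict Implicit. Unset Printing Implicit Defensive.
Import GRing.Theory.
Local Open Scope ring_scope.

Lemma F2cases (x : 'F_2) : x = 0 \/ x = 1.
Proof. case: x => [[|[|k]]] Hk; [left|right|]; try exact: val_inj. by []. Qed.
Lemma F2add (x : 'F_2) : x + x = 0.
Proof. by case: (F2cases x) => ->; apply: val_inj. Qed.

Lemma e2 m : (2 ^ m + 2 ^ m = 2 ^ m.+1)%N.
Proof. by rewrite expnS mul2n addnn. Qed.
Definition lo m (j : 'I_(2 ^ m)) : 'I_(2 ^ m.+1) := cast_ord (e2 m) (lshift (2 ^ m) j).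
Definition hi m (j : 'I_(2 ^ m)) : 'I_(2 ^ m.+1) := cast_ord (e2 m) (rshift (2 ^ m) j).
Lemma loE m j : val (@lo m j) = val j. Proof. by []. Qed.
Lemma hiE m j : val (@hi m j) = (2 ^ m + j)%N. Proof. by []. Qed.

Lemma ord_case m (P : 'I_(2 ^ m.+1) -> Prop) :
  (forall j, P (lo j)) -> (forall j, P (hi j)) -> forall k, P k.
Proof.
move=> Hl Hh k; have -> : k = cast_ord (e2 m) (cast_ord (esym (e2 m)) k).
  by rewrite cast_ordKV.
case: (splitP (cast_ord (esym (e2 m)) k)) => j Hj.
- have -> : cast_ord (esym (e2 m)) k = lshift _ j by apply: val_inj.
  exact: Hl.
- have -> : cast_ord (esym (e2 m)) k = rshift _ j by apply: val_inj.
  exact: Hh.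
Qed.

Lemma big_split2 m (R : Type) (idx : R) (op : Monoid.com_law idx) (F : 'I_(2 ^ m.+1) -> R) :
  \big[op/idx]_k F k = op (\big[op/idx]_j F (lo j)) (\big[op/idx]_j F (hi j)).
Proof.
rewrite (reindex (cast_ord (e2 m))); last first.
  by exists (cast_ord (esym (e2 m))) => x _; rewrite ?cast_ordK ?cast_ordKV.
by rewrite big_split_ord.
Qed.

Lemma div_lo m (j : nat) : (j < 2 ^ m)%N -> (j %/ 2 ^ m = 0 /\ j %% 2 ^ m = j)%N.
Proof. by move=> H; rewrite divn_small // modn_small. Qed.
Lemma div_hi m (j : nat) : (j < 2 ^ m)%N -> ((2 ^ m + j) %/ 2 ^ m = 1 /\ (2 ^ m + j) %% 2 ^ m = j)%N.
Proof.
move=> H; rewrite -{1 3}(mul1n (2 ^ m)%N) divnMDl ?expn_gt0 // modnMDl.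
by rewrite divn_small // modn_small.
Qed.

Lemma GN_ll m k j : GN m.+1 (lo k) (lo j) = GN m k j.
Proof.
rewrite !mxE /=; have [a1 a2] := div_lo (ltn_ord k); have [b1 b2] := div_lo (ltn_ord j).
by rewrite a1 a2 b1 b2.
Qed.
Lemma GN_hl m k j : GN m.+1 (hi k) (lo j) = GN m k j.
Proof.
rewrite !mxE /=; have [a1 a2] := div_hi (ltn_ord k); have [b1 b2] := div_lo (ltn_ord j).
by rewrite a1 a2 b1 b2.
Qed.
Lemma GN_lh m k j : GN m.+1 (lo k) (hi j) = 0.
Proof.
rewrite !mxE /=; have [a1 a2] := div_lo (ltn_ord k); have [b1 b2] := div_hi (ltn_ord j).
by rewrite a1 a2 b1 b2.
Qed.
Lemma GN_hh m k j : GN m.+1 (hi k) (hi j) = GN m k j.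
Proof.
rewrite !mxE /=; have [a1 a2] := div_hi (ltn_ord k); have [b1 b2] := div_hi (ltn_ord j).
by rewrite a1 a2 b1 b2.
Qed.

Definition vl m (v : 'rV['F_2]_(2 ^ m.+1)) : 'rV['F_2]_(2 ^ m) := \row_j v 0 (lo j).
Definition vh m (v : 'rV['F_2]_(2 ^ m.+1)) : 'rV['F_2]_(2 ^ m) := \row_j v 0 (hi j).
Definition join m (a b : 'rV['F_2]_(2 ^ m)) : 'rV['F_2]_(2 ^ m.+1) :=
  \row_k match split (cast_ord (esym (e2 m)) k) with inl j => a 0 j | inr j => b 0 j end.

Lemma join_lo m a b j : @join m a b 0 (lo j) = a 0 j.
Proof. by rewrite mxE cast_ordK (unsplitK (inl _)). Qed.
Lemma join_hi m a b j : @join m a b 0 (hi j) = b 0 j.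
Proof. by rewrite mxE cast_ordK (unsplitK (inr _)). Qed.
Lemma vl_join m a b : vl (@join m a b) = a.
Proof. by apply/rowP => j; rewrite mxE join_lo. Qed.
Lemma vh_join m a b : vh (@join m a b) = b.
Proof. by apply/rowP => j; rewrite mxE join_hi. Qed.

Lemma sum_split2 m (V : nmodType) (F : 'I_(2 ^ m.+1) -> V) :
  \sum_k F k = \sum_j F (lo j) + \sum_j F (hi j).
Proof. exact: big_split2. Qed.
Lemma sumn_split2 m (F : 'I_(2 ^ m.+1) -> nat) :
  (\sum_k F k = \sum_j F (lo j) + \sum_j F (hi j))%N.
Proof. exact: big_split2. Qed.

Lemma block_lo m (z : 'rV['F_2]_(2 ^ m.+1)) j :
  (z *m GN m.+1) 0 (lo j) = (vl z *m GN m) 0 j + (vh z *m GN m) 0 j.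
Proof.
rewrite !mxE sum_split2; congr (_ + _); apply: eq_bigr => k _;
  by rewrite ?GN_ll ?GN_hl !mxE.
Qed.
Lemma block_hi m (z : 'rV['F_2]_(2 ^ m.+1)) j :
  (z *m GN m.+1) 0 (hi j) = (vh z *m GN m) 0 j.
Proof.
rewrite !mxE sum_split2 big1 ?add0r; last by move=> k _; rewrite GN_lh mulr0.
by apply: eq_bigr => k _; rewrite GN_hh !mxE.
Qed.

Lemma GN_surj n (y : 'rV['F_2]_(2 ^ n)) : exists z, y = z *m GN n.
Proof.
elim: n y => [|m IH] y.
  exists y; apply/rowP => j; rewrite !mxE big_ord1 !mxE /=.
  by rewrite !ord1 /= mulr1.
have [z2 H2] := IH (vh y); have [z1 H1] := IH (vl y - vh y).
exists (join z1 z2); apply/rowP; apply: ord_case => j.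
  rewrite block_lo vl_join vh_join -H1 -H2 !mxE.
  by rewrite subrK.
by rewrite block_hi vh_join -H2 mxE.
Qed.

Lemma card_sum (T : finType) (P : pred T) : #|[set x | P x]| = (\sum_x (P x : nat))%N.
Proof.
rewrite cardsE -sum1_card big_mkcond /=; apply: eq_bigr => x _.
by rewrite unfold_in; case: (P x).
Qed.

Lemma wt_sum N (v : 'rV['F_2]_N) : wt v = (\sum_j nat_of_bool (v ord0 j != 0%R))%N.
Proof. exact: card_sum. Qed.

Lemma wt_split m (v : 'rV['F_2]_(2 ^ m.+1)) : wt v = (wt (vl v) + wt (vh v))%N.
Proof.
rewrite !wt_sum sumn_split2.
by congr (_ + _)%N; apply: eq_bigr => j _; rewrite mxE.
Qed.

Definition Zc n (i : nat) (c : 'F_2) (z : 'rV['F_2]_(2 ^ n)) : bool :=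
  [forall k : 'I_(2 ^ n), ((k < i)%N ==> (z 0 k == 0)) && ((val k == i) ==> (z 0 k == c))].
Arguments Zc : clear implicits.
Definition Cc n i c (v : 'rV['F_2]_(2 ^ n)) : bool :=
  [exists z, Zc n i c z && (v == z *m GN n)].
Arguments Cc : clear implicits.
Definition Count n i c w := #|[set v | Cc n i c v && (wt v == w)]|.

Definition mask n i (D : 'rV['F_2]_(2 ^ n)) : 'rV['F_2]_(2 ^ n) :=
  \row_k (if (i < k)%N then D 0 k else 0).

Lemma maskT n i D : D *m tailspan n i = mask i D *m GN n.
Proof.
apply/rowP => j; rewrite !mxE; apply: eq_bigr => k _; rewrite !mxE.
by case: ifP; rewrite ?mxE ?mulr0 ?mul0r.
Qed.

Lemma growE n i (Hi : (i < 2 ^ n)%N) : grow n i = delta_mx 0 (Ordinal Hi) *m GN n.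
Proof. by rewrite -rowE; apply/rowP => j; rewrite !mxE. Qed.

Lemma mem_tail n i (Hi : (i < 2 ^ n)%N) c v :
  (v - c *: grow n i <= tailspan n i)%MS = Cc n i c v.
Proof.
have eqk : forall k : 'I_(2 ^ n), (k == Ordinal Hi) = (val k == i) by [].
apply/idP/idP.
  case/submxP => D HD; apply/existsP; exists (mask i D + c *: delta_mx 0 (Ordinal Hi)).
  apply/andP; split.
    apply/forallP => k; rewrite !mxE eqk /=.
    case: (ltngtP k i) => h; rewrite ?mulr0 ?mulr1 ?addr0 ?add0r //=.
  by apply/eqP; rewrite mulmxDl -scalemxAl -growE -maskT -HD subrK.
case/existsP => z /andP [Zz /eqP ->]; apply/submxP.
exists (z - c *: delta_mx 0 (Ordinal Hi)); rewrite maskT.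
have -> : mask i (z - c *: delta_mx 0 (Ordinal Hi)) = z - c *: delta_mx 0 (Ordinal Hi).
  apply/rowP => k; rewrite !mxE eqk /=; case: ifP => // /negbT; rewrite -leqNgt => hk.
  move/forallP: Zz => /(_ k) /andP [h1 h2].
  case: (ltngtP k i) hk => // h _.
    by move: h1; rewrite h /= => /eqP ->; rewrite mulr0 subr0.
  by move: h2; rewrite /= h eqxx /= => /eqP ->; rewrite mulr1 subrr.
by rewrite mulmxBl -scalemxAl -growE.
Qed.

Lemma M2add a b (x : 'M['F_2]_(a, b)) : x + x = 0.
Proof. by apply/matrixP => i j; rewrite !mxE F2add. Qed.

Lemma vsplit_eq m (v w : 'rV['F_2]_(2 ^ m.+1)) : vl v = vl w -> vh v = vh w -> v = w.
Proof.
move=> /rowP Hl /rowP Hh; apply/rowP; apply: ord_case => j.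
  by have := Hl j; rewrite !mxE.
by have := Hh j; rewrite !mxE.
Qed.

Lemma vl_mul m (z : 'rV['F_2]_(2 ^ m.+1)) : vl (z *m GN m.+1) = vl z *m GN m + vh z *m GN m.
Proof. by apply/rowP => j; rewrite [in LHS]mxE block_lo [in RHS]mxE. Qed.
Lemma vh_mul m (z : 'rV['F_2]_(2 ^ m.+1)) : vh (z *m GN m.+1) = vh z *m GN m.
Proof. by apply/rowP => j; rewrite [in LHS]mxE block_hi. Qed.
Lemma vl_add m (a b : 'rV['F_2]_(2 ^ m.+1)) : vl (a + b) = vl a + vl b.
Proof. by apply/rowP => j; rewrite !mxE. Qed.
Lemma vh_add m (a b : 'rV['F_2]_(2 ^ m.+1)) : vh (a + b) = vh a + vh b.
Proof. by apply/rowP => j; rewrite !mxE. Qed.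

Lemma Zc_lo m i c z : (i < 2 ^ m)%N -> Zc m.+1 i c z = Zc m i c (vl z).
Proof.
move=> Hi; apply/forallP/forallP.
  by move=> H j; have := H (lo j); rewrite mxE.
move=> H; apply: ord_case => j.
  by have := H j; rewrite mxE.
rewrite /=.
have -> : (2 ^ m + j < i)%N = false by lia.
by have -> : (2 ^ m + j == i)%N = false by lia.
Qed.

Lemma Cc_lo m i c v : (i < 2 ^ m)%N -> Cc m.+1 i c v = Cc m i c (vl v + vh v).
Proof.
move=> Hi; apply/existsP/existsP.
  case=> z /andP [Zz /eqP ->]; exists (vl z); rewrite -Zc_lo // Zz /=.
  by rewrite vl_mul vh_mul -addrA M2add addr0.
case=> z1 /andP [Zz /eqP H1]; have [z2 H2] := GN_surj (vh v).
exists (join z1 z2); rewrite Zc_lo // vl_join Zz /=; apply/eqP.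
apply: vsplit_eq; rewrite ?vl_mul ?vh_mul ?vl_join ?vh_join -?H1 -?H2 //.
by rewrite -addrA M2add addr0.
Qed.

Lemma Cc_hi m i c v : (2 ^ m <= i)%N ->
  Cc m.+1 i c v = (vl v == vh v) && Cc m (i - 2 ^ m) c (vl v).
Proof.
move=> Hi; apply/existsP/andP.
  case=> z /andP [/forallP Zz /eqP ->].
  have Hz : vl z = 0.
    apply/rowP => j; rewrite !mxE; have := Zz (lo j) => /andP [] /=.
    have -> : (j < i)%N by have := ltn_ord j; lia.
    by move=> /eqP.
  rewrite vl_mul vh_mul Hz mul0mx add0r; split => //.
  apply/existsP; exists (vh z); rewrite eqxx andbT; apply/forallP => j.
  have := Zz (hi j); rewrite /= !mxE.
  have -> : (2 ^ m + j < i)%N = (j < i - 2 ^ m)%N by lia.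
  by have -> : (2 ^ m + j == i)%N = (nat_of_ord j == i - 2 ^ m)%N by lia.
case=> /eqP Hlh /existsP [z2 /andP [/forallP Zz /eqP H2]].
exists (join 0 z2); apply/andP; split.
  apply/forallP; apply: ord_case => j.
    rewrite join_lo mxE eqxx implybT /=.
    by have -> : (j == i :> nat) = false by have := ltn_ord j; lia.
  rewrite join_hi /=.
  have -> : (2 ^ m + j < i)%N = (j < i - 2 ^ m)%N by lia.
  have -> : (2 ^ m + j == i)%N = (nat_of_ord j == i - 2 ^ m)%N by lia.
  exact: Zz.
apply/eqP; apply: vsplit_eq; rewrite ?vl_mul ?vh_mul ?vl_join ?vh_join ?mul0mx ?add0r -?H2 //.
Qed.

Lemma card_bij_in (T1 T2 : finType) (f : T1 -> T2) (g : T2 -> T1) (P1 : pred T1) (P2 : pred T2) :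
  (forall x, P1 x -> P2 (f x) /\ g (f x) = x) ->
  (forall y, P2 y -> P1 (g y) /\ f (g y) = y) ->
  #|[set x | P1 x]| = #|[set y | P2 y]|.
Proof.
move=> H1 H2; rewrite -(@card_in_imset _ _ f [set x | P1 x]); last first.
  move=> x1 x2; rewrite !inE => h1 h2 e.
  by rewrite -(H1 _ h1).2 e (H1 _ h2).2.
apply: eq_card => y; rewrite inE; apply/imsetP/idP.
  by case=> x; rewrite inE => /H1 [h _] ->.
move=> /H2 [h e]; exists (g y) => //; by rewrite inE.
Qed.

Lemma card_pair (T1 T2 : finType) (P : pred T1) (Q : T1 -> pred T2) :
  #|[set p : T1 * T2 | P p.1 && Q p.1 p.2]| = (\sum_(x | P x) #|[set y | Q x y]|)%N.
Proof.
rewrite card_sum -(pair_bigA _ (fun x y => nat_of_bool (P x && Q x y))) /=.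
rewrite [RHS]big_mkcond /=; apply: eq_bigr => x _; rewrite card_sum.
by case: (P x) => //=; rewrite big1.
Qed.

Lemma wt_join m (a b : 'rV['F_2]_(2 ^ m)) : wt (join a b) = (wt a + wt b)%N.
Proof. by rewrite wt_split vl_join vh_join. Qed.

Lemma addKF2 a b (x y : 'M['F_2]_(a, b)) : x + y + y = x.
Proof. by rewrite -addrA M2add addr0. Qed.

Lemma join_split m (v : 'rV['F_2]_(2 ^ m.+1)) : join (vl v) (vh v) = v.
Proof. by apply: vsplit_eq; rewrite ?vl_join ?vh_join. Qed.

Lemma Count_hi_even m i c w : (2 ^ m <= i < 2 ^ m.+1)%N ->
  Count m.+1 i c (2 * w)%N = Count m (i - 2 ^ m) c w.
Proof.
case/andP => Hi Hi2; rewrite /Count.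
rewrite (@card_bij_in _ _ (fun v => (vl v, vh v)) (fun p => join p.1 p.2) _
   (fun p => (Cc m (i - 2 ^ m) c p.1 && (wt p.1 == w)) && (p.2 == p.1))); first last.
- case=> x y /= /andP [/andP [hC /eqP hw] /eqP ->]; rewrite vl_join vh_join; split => //.
  by rewrite Cc_hi // vl_join vh_join eqxx hC wt_join hw addnn -mul2n eqxx.
- move=> v /andP [hC /eqP hw]; move: hC; rewrite Cc_hi // => /andP [/eqP e hC].
  rewrite join_split; split => //=; rewrite hC e eqxx andbT /=.
  by move: hw; rewrite wt_split e addnn -mul2n => /eqP; rewrite eqn_mul2l.
rewrite (card_pair (fun x => Cc m (i - 2 ^ m) c x && (wt x == w)) (fun x y => y == x)).
rewrite card_sum big_mkcond /=; apply: eq_bigr => x _.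
case: (_ && _) => //; rewrite (_ : [set y | y == x] = [set x]) ?cards1 //.
by apply/setP => y; rewrite !inE.
Qed.

Lemma Count_hi_odd m i c w : (2 ^ m <= i)%N -> Count m.+1 i c (2 * w)%N.+1 = 0%N.
Proof.
move=> Hi; rewrite /Count card_sum big1 // => v _.
case hC: (Cc m.+1 i c v) => //=; move: hC; rewrite Cc_hi // => /andP [/eqP e _].
by rewrite wt_split e addnn -mul2n; case: eqP => // h; move: (congr1 odd h); rewrite /= !oddM /=.
Qed.

Definition fw (M w' w : nat) : nat :=
  if (odd w' == odd w) && (w' <= w)%N then ('C(M - w', (w - w') %/ 2) * 2 ^ w')%N else 0%N.

Lemma F2nat (x : 'F_2) : ((x != 0)%:R = x).
Proof. by case: (F2cases x) => ->. Qed.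

Lemma card_sub_sets (T : finType) (U : {set T}) k :
  #|[set B : {set T} | #|B :\: U| == k]| = (2 ^ #|U| * 'C(#|T| - #|U|, k))%N.
Proof.
rewrite (@card_bij_in _ _ (fun B => (B :&: U, B :\: U)) (fun p => p.1 :|: p.2) _
   (fun p => (p.1 \subset U) && ((p.2 \subset ~: U) && (#|p.2| == k)))); first last.
- case=> P Q /= /andP [hP /andP [hQ /eqP hk]].
  have e1 : (P :|: Q) :&: U = P.
    apply/setP => x; have h1 : (x \in P) ==> (x \in U) by apply/implyP/subsetP.
    have h2 : (x \in Q) ==> (x \in ~: U) by apply/implyP/subsetP.
    move: h1 h2; rewrite !inE.
    by case: (x \in P); case: (x \in Q); case: (x \in U).
  have e2 : (P :|: Q) :\: U = Q.
    apply/setP => x; have h1 : (x \in P) ==> (x \in U) by apply/implyP/subsetP.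
    have h2 : (x \in Q) ==> (x \in ~: U) by apply/implyP/subsetP.
    move: h1 h2; rewrite !inE.
    by case: (x \in P); case: (x \in Q); case: (x \in U).
  by rewrite e1 e2 hk eqxx.
- move=> B /eqP hk; split; last by rewrite /= setID.
  apply/and3P; split; [exact: subsetIr | by rewrite setDE subsetIr | by rewrite /= hk].
rewrite (card_pair (fun P : {set T} => P \subset U) (fun (P Q : {set T}) => (Q \subset ~: U) && (#|Q| == k))).
under eq_bigr do rewrite cards_draws.
rewrite sum_nat_cond_const; congr (_ * _)%N.
  by rewrite -card_powerset; apply: eq_card => P; rewrite !inE.
by rewrite [in RHS](cardsCs U) subKn ?max_card.
Qed.

Lemma comb M (u : 'rV['F_2]_M) w :
  #|[set b : 'rV['F_2]_M | (wt (u + b) + wt b == w)%N]| = fw M (wt u) w.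
Proof.
set U := [set j | u 0 j != 0].
have wU : wt u = #|U| by [].
have key b : (wt (u + b) + wt b = wt u + 2 * #|[set j | (b ord0 j != 0%R) && (u ord0 j == 0%R)]|)%N.
  rewrite !wt_sum card_sum -big_split /= big_distrr -big_split /=.
  apply: eq_bigr => j _; rewrite mxE.
  by case: (F2cases (u 0 j)) => ->; case: (F2cases (b 0 j)) => ->; rewrite ?F2add.
rewrite /fw; case: ifP => [/andP [hodd hle] | hc].
- set k := ((w - wt u) %/ 2)%N.
  have hw : w = (wt u + 2 * k)%N.
    have := divn_eq (w - wt u) 2; rewrite modn2 oddB // -(eqP hodd) addbb /= addn0 -/k.
    lia.
  transitivity #|[set b : 'rV['F_2]_M | #|[set j | (b 0 j != 0) && (u 0 j == 0)]| == k]|.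
    by apply: eq_card => b; rewrite !inE key {1}hw eqn_add2l eqn_mul2l.
  rewrite (@card_bij_in _ _ (fun b : 'rV['F_2]_M => [set j | b 0 j != 0])
     (fun B => \row_j ((j \in B)%:R : 'F_2)) _ (fun B => #|B :\: U| == k)).
    by rewrite card_sub_sets card_ord wU mulnC.
  + move=> b hb; split.
      rewrite (_ : _ :\: U = [set j | (b 0 j != 0) && (u 0 j == 0)]) //.
      by apply/setP => j; rewrite !inE negbK andbC.
    by apply/rowP => j; rewrite !mxE inE F2nat.
  + move=> B hB; split.
      rewrite (_ : [set j | _ && _] = B :\: U) //; apply/setP => j; rewrite !inE !mxE.
      rewrite negbK [LHS]andbC; congr (_ && _); by case: (j \in B); rewrite ?oner_eq0 ?eqxx.
    by apply/setP => j; rewrite !inE mxE; case: (j \in B); rewrite ?oner_eq0 ?eqxx.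
- apply/eqP; rewrite cards_eq0; apply/eqP/setP => b; rewrite !inE key.
  apply/negbTE/eqP => E; move: hc; rewrite -E oddD oddM /= addbF eqxx leq_addr.
  by [].
Qed.

Lemma wt_le M (u : 'rV['F_2]_M) : (wt u < M.+1)%N.
Proof. by rewrite ltnS /wt; apply: leq_trans (max_card _) _; rewrite card_ord. Qed.

Lemma partition_wt M (P : pred 'rV['F_2]_M) (g : nat -> nat) :
  (\sum_(u | P u) g (wt u) = \sum_(w' < M.+1) #|[set u | P u && (wt u == w')]| * g w')%N.
Proof.
transitivity (\sum_(u | P u) \sum_(w' < M.+1) (wt u == w') * g w')%N.
  apply: eq_bigr => u _; rewrite (bigD1 (Ordinal (wt_le u))) //= eqxx mul1n big1 ?addn0 //.
  move=> i; rewrite -val_eqE /= eq_sym => /negbTE ->; by [].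
rewrite exchange_big; apply: eq_bigr => i _; rewrite -big_distrl /= card_sum.
by congr (_ * _)%N; rewrite big_mkcond /=; apply: eq_bigr => u _; case: (P u).
Qed.

Lemma Count_lo m i c w : (i < 2 ^ m)%N ->
  Count m.+1 i c w = (\sum_(w' < (2 ^ m).+1) Count m i c w' * fw (2 ^ m) w' w)%N.
Proof.
move=> Hi; rewrite /Count.
rewrite (@card_bij_in _ _ (fun v => (vl v + vh v, vh v)) (fun p => join (p.1 + p.2) p.2) _
   (fun p => Cc m i c p.1 && (wt (p.1 + p.2) + wt p.2 == w)%N)); first last.
- case=> x y /= /andP [hC hw]; rewrite vl_join vh_join addKF2; split => //.
  by rewrite Cc_lo // vl_join vh_join addKF2 hC wt_join.
- move=> v /andP [hC hw]; rewrite addKF2 join_split; split => //.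
  by rewrite -Cc_lo // hC -wt_split.
rewrite (card_pair (fun x => Cc m i c x) (fun x y => (wt (x + y) + wt y == w)%N)).
under eq_bigr do rewrite comb.
exact: (partition_wt (fun x => Cc m i c x) (fun a => fw (2 ^ m) a w)).
Qed.

Lemma GN0 (y : 'rV['F_2]_(2 ^ 0)) : y *m GN 0 = y.
Proof.
apply/rowP => j; rewrite !mxE big_ord1 !mxE /=.
by rewrite !ord1 /= mulr1.
Qed.

Lemma Count0 c w : Count 0 0 c w = nat_of_bool (nat_of_bool (c != 0) == w).
Proof.
have hC v : Cc 0 0 c v = (v == const_mx c).
  apply/existsP/eqP.
    case=> z /andP [/forallP Zz /eqP ->]; rewrite GN0; apply/rowP => j.
    by rewrite ord1 mxE; have := Zz ord0 => /andP [_ /eqP]; apply.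
  move=> ->; exists (const_mx c); rewrite GN0 eqxx andbT; apply/forallP => k.
  by rewrite ord1 mxE /= eqxx.
rewrite /Count card_sum (bigD1 (const_mx c)) //= big1 ?addn0.
  by rewrite hC eqxx /= wt_sum big_ord1 mxE.
by move=> v /negbTE hv; rewrite hC hv.
Qed.

Lemma Scount_Count n i w : (i < 2 ^ n)%N -> Scount n i w = Count n i 1 w.
Proof.
move=> Hi; rewrite /Scount /Count; apply: eq_card => v; rewrite !inE.
by rewrite -(mem_tail Hi) scale1r.
Qed.
Lemma Tcount_Count n i w : (i < 2 ^ n)%N -> Tcount n i w = Count n i 0 w.
Proof.
move=> Hi; rewrite /Tcount /Count; apply: eq_card => v; rewrite !inE.
by rewrite -(mem_tail Hi) scale0r subr0.
Qed.

Lemma main_lo m i c w : (i < 2 ^ m)%N ->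
  Count m.+1 i c w =
  (\sum_(0 <= w' < (minn w (2 ^ m)).+1 | odd w' == odd w)
     Count m i c w' * 'C(2 ^ m - w', (w - w') %/ 2) * 2 ^ w')%N.
Proof.
move=> Hi; rewrite Count_lo //.
rewrite (big_nat_widen _ _ (2 ^ m).+1); last by rewrite ltnS geq_minr.
rewrite -(big_mkord xpredT (fun w' => Count m i c w' * fw (2 ^ m) w' w)%N).
rewrite [RHS]big_mkcond /=; apply: eq_big_nat => w' /andP [_ hw'].
have h2 : (w' <= 2 ^ m)%N by rewrite -ltnS.
rewrite /fw ltnS leq_min h2 andbT.
by case: (_ && _); rewrite ?mulnA ?muln0.
Qed.

Local Close Scope ring_scope.
Unset Implicit Arguments.

Theorem mainTheorem2 (n : nat) (hn : (1 <= n)%N) :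
  (Scount 0 0 0 = 0%N /\ Scount 0 0 1 = 1%N) /\
  (forall i w, (i < 2 ^ n %/ 2)%N ->
     Scount n i w =
     (\sum_(0 <= w' < (minn w (2 ^ n %/ 2)).+1 | odd w' == odd w)
        Scount n.-1 i w' * 'C(2 ^ n %/ 2 - w', (w - w') %/ 2) * 2 ^ w')%N) /\
  (forall i w, (2 ^ n %/ 2 <= i < 2 ^ n)%N ->
     Scount n i (2 * w) = Scount n.-1 (i - 2 ^ n %/ 2) w /\
     Scount n i (2 * w).+1 = 0%N) /\
  (Tcount 0 0 0 = 1%N /\ Tcount 0 0 1 = 0%N) /\
  (forall i w, (i < 2 ^ n %/ 2)%N ->
     Tcount n i w =
     (\sum_(0 <= w' < (minn w (2 ^ n %/ 2)).+1 | odd w' == odd w)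
        Tcount n.-1 i w' * 'C(2 ^ n %/ 2 - w', (w - w') %/ 2) * 2 ^ w')%N) /\
  (forall i w, (2 ^ n %/ 2 <= i < 2 ^ n)%N ->
     Tcount n i (2 * w) = Tcount n.-1 (i - 2 ^ n %/ 2) w /\
     Tcount n i (2 * w).+1 = 0%N).
Proof.
case: n hn => // m _.
have e : (2 ^ m.+1 %/ 2 = 2 ^ m)%N by rewrite expnS mulKn.
have lt1 : forall i, (i < 2 ^ m -> i < 2 ^ m.+1)%N by move=> i; rewrite expnS; lia.
have lt2 : forall i, (2 ^ m <= i < 2 ^ m.+1 -> i - 2 ^ m < 2 ^ m)%N by move=> i; rewrite expnS; lia.
rewrite e /=.
split; first by rewrite !Scount_Count // !Count0 GRing.oner_eq0.
split.
  move=> i w Hi; rewrite Scount_Count ?lt1 // main_lo //.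
  by apply: eq_bigr => w' _; rewrite Scount_Count.
split.
  move=> i w Hi; have Hi' := lt2 _ Hi; case/andP: Hi => Hi1 Hi2.
  rewrite !Scount_Count // Count_hi_even ?Hi1 //; split => //.
  exact: Count_hi_odd.
split; first by rewrite !Tcount_Count // !Count0 eqxx.
split.
  move=> i w Hi; rewrite Tcount_Count ?lt1 // main_lo //.
  by apply: eq_bigr => w' _; rewrite Tcount_Count.
move=> i w Hi; have Hi' := lt2 _ Hi; case/andP: Hi => Hi1 Hi2.
rewrite !Tcount_Count // Count_hi_even ?Hi1 //; split => //.
exact: Count_hi_odd.
Qed.
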